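(* Let $(H_i)_{i=0}^\infty = (2^{\alpha_i}3^{\beta_i})_{i=0}^\infty$ be the increasing enumeration of $\mathcal{H}=\{2^\alpha3^\beta : \alpha,\beta\in\mathbb{N}_0\}$, and define $f\colon\mathbb{N}_0\to\{+1,-1\}$ by $f(0)=+1$ and $f(n)=(-1)^{\alpha_i+\beta_i}$ for $n\in\{H_i,H_i+1,\dots,H_{i+1}-1\}$, $i\in\mathbb{N}_0$. Then there is no periodic sequence $\tilde f\colon\mathbb{N}_0\to\{+1,-1\}$ such that $f(n)=\tilde f(n)$ for almost all $n\in\mathbb{N}_0$.
   Context: $\mathbb{N}_0=\{0,1,2,\dots\}$. A property holds for almost all $n\in\mathbb{N}_0$ if the set of $n$ where it fails has upper density $\limsup_{N\to\infty}|\cdot\cap\{0,\dots,N-1\}|/N$ equal to $0$. *)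

(* Defs.v *)
From mathcomp Require Import all_boot all_order all_algebra.
Set Implicit Arguments. Unset Strict Implicit. Unset Printing Implicit Defensive.
Import Order.TTheory GRing.Theory Num.Theory.
Local Open Scope ring_scope.

(* Upper density of the set where P fails is 0:
   limsup_{N->oo} |{n < N | ~ P n}| / N = 0, written with an explicit epsilon
   (the counting ratios are nonnegative, so limsup = 0 iff they are eventually
   below every eps > 0). *)
Definition almost_all (P : pred nat) : Prop :=
  forall eps : rat, 0 < eps ->
    exists N0 : nat, forall N : nat, (N0 <= N)%N ->
      ((count (predC P) (iota 0 N))%:R : rat) <= eps * N%:R.

Definition periodic (ft : nat -> int) : Prop :=
  exists p : nat, (0 < p)%N /\ forall n, ft (n + p)%N = ft n.

(* Main.v *)
Require Import Defs.
From mathcomp Require Import all_boot all_order all_algebra.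
From mathcomp Require Import zify.
Import Order.TTheory GRing.Theory Num.Theory.

Lemma logn2_23 a b : logn 2 (2 ^ a * 3 ^ b) = a.
Proof.
rewrite lognM ?expn_gt0 // pfactorK // logn_coprime ?addn0 //.
by apply: coprimeXr.
Qed.

Lemma logn3_23 a b : logn 3 (2 ^ a * 3 ^ b) = b.
Proof.
rewrite lognM ?expn_gt0 // pfactorK // logn_coprime //.
by apply: coprimeXr.
Qed.

Lemma uniq23 a b c d : 2 ^ a * 3 ^ b = 2 ^ c * 3 ^ d -> a = c /\ b = d.
Proof.
move=> E; split; first by rewrite -(logn2_23 a b) E logn2_23.
by rewrite -(logn3_23 a b) E logn3_23.
Qed.

Lemma count_mul (P : pred nat) p R : 0 < p ->
  count (fun k => P (p * k)) (iota 0 R) <= count P (iota 0 (p * R)).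
Proof.
move=> p0; elim: R => [|R IH]; first by rewrite muln0.
rewrite mulnSr iotaD count_cat add0n -[in X in X <= _]addn1 iotaD count_cat /= addn0 add0n.
apply: leq_add => //.
rewrite -(prednK p0) /= -(prednK p0); exact: leq_addr.
Qed.

Lemma count_sub (P : pred nat) L R : L <= R ->
  count P (iota L (R - L)) <= count P (iota 0 R).
Proof.
move=> LR; rewrite -{2}(subnKC LR) iotaD count_cat add0n; exact: leq_addl.
Qed.
Local Open Scope ring_scope.

Theorem proposition4p4
  (H alpha beta : nat -> nat) (f : nat -> int)
  (H_incr : forall i, (H i < H i.+1)%N)
  (H_range : forall m : nat, (exists i, H i = m) <-> exists a b : nat, m = (2 ^ a * 3 ^ b)%N)
  (H_exp : forall i, H i = (2 ^ alpha i * 3 ^ beta i)%N)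
  (f0 : f 0%N = 1)
  (fH : forall i n : nat, (H i <= n < H i.+1)%N -> f n = (-1) ^+ (alpha i + beta i)) :
  ~ exists ft : nat -> int,
      (forall n, ft n = 1 \/ ft n = -1) /\ periodic ft /\
      almost_all (fun n => f n == ft n).
Proof.
move=> [ft [pm [[p [p0 per]] aa]]].
have Hlt : {homo H : i j / (i < j)%N} := homo_ltn ltn_trans H_incr.
have Hle : {mono H : i j / (i <= j)%N} := leq_mono Hlt.
have Hltm : forall i j, (H i < H j)%N = (i < j)%N by move=> i j; rewrite !ltnNge Hle.
have Hge : forall i, (i <= H i)%N.
  elim=> [|i IH] //; exact: leq_ltn_trans IH (H_incr i).
have smooth : forall a b, exists i, H i = (2 ^ a * 3 ^ b)%N.
  by move=> a b; apply/H_range; exists a, b.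
have H01 : (H 0 <= 1)%N.
  have [i Hi] := smooth 0%N 0%N; rewrite -[1%N]/(2 ^ 0 * 3 ^ 0)%N -Hi Hle //.
have Hbr : forall n, (H 0 <= n)%N -> exists i, (H i <= n < H i.+1)%N.
  move=> n Hn; suff: forall m, (n < H m)%N -> exists i, (H i <= n < H i.+1)%N.
    by apply; exact: leq_ltn_trans (Hge n.+1).
  elim=> [|m IH]; first by rewrite ltnNge Hn.
  move=> hm; case: (ltnP n (H m)) => h; first exact: IH.
  by exists m; rewrite h hm.
have ftp : forall k, ft (p * k)%N = ft 0%N.
  elim=> [|k IH]; first by rewrite muln0.
  by rewrite mulnSr per.
have key : forall c n, (4 * 3 ^ c <= 2 * n < 9 * 3 ^ c)%N -> f (2 * n)%N = - f n.
  move=> c n /andP [h1 h2].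
  have n1 : (H 0 <= n)%N.
    apply: leq_trans H01 _; rewrite lt0n; apply/eqP => n0; move: h1; rewrite n0 muln0.
    by rewrite leqn0 muln_eq0 expn_eq0.
  have [i /andP [hi1 hi2]] := Hbr n n1.
  have [j /andP [hj1 hj2]] : exists j, (H j <= 2 * n < H j.+1)%N.
    apply: Hbr; apply: leq_trans n1 _; exact: leq_pmull.
  have [j0 Hj0] := smooth (alpha i).+1 (beta i).
  have Hj0' : H j0 = (2 * H i)%N by rewrite Hj0 H_exp expnS mulnA.
  have j0j : (j0 <= j)%N.
    by rewrite -ltnS -Hltm Hj0' (leq_ltn_trans _ hj2) // leq_mul2l hi1 orbT.
  have [j1 Hj1] := smooth 2 c.
  have j1j : (j1 <= j)%N.
    by rewrite -ltnS -Hltm Hj1 (leq_ltn_trans _ hj2).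
  have Hj4 : (4 * 3 ^ c <= H j)%N by move: j1j; rewrite -Hle Hj1.
  have HjE : H j = (2 * H i)%N.
    apply/eqP; rewrite eqn_leq (_ : (2 * H i <= H j)%N) ?andbT; last by rewrite -Hj0' Hle.
    move: (H_exp j) Hj4 (hj1); case: (alpha j) => [|a] ->.
      rewrite expn0 mul1n => h4 h5.
      have : (3 ^ beta j < 3 ^ c.+2)%N.
        by apply: leq_ltn_trans h5 _; rewrite !expnS mulnA.
      rewrite ltn_exp2l // ltnS => hb.
      have : (3 ^ beta j <= 3 ^ c.+1)%N by rewrite leq_exp2l.
      rewrite expnS => h6; have := leq_trans h4 h6.
      by rewrite leq_mul2r expn_eq0.
    move=> _ h5.
    have [i' Hi'] := smooth a (beta j).
    have h6 : (H i' <= n)%N.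
      by rewrite -(@leq_pmul2l 2) // Hi' mulnA -expnS.
    have : (i' <= i)%N.
      rewrite leqNgt; apply/negP => hii.
      have h7 : (H i.+1 <= H i')%N by rewrite Hle.
      by move: (leq_trans hi2 h7); rewrite ltnNge h6.
    rewrite -Hle => hii.
    by rewrite expnS -mulnA -Hi' leq_mul2l hii orbT.
  have [ea eb] : (alpha j = (alpha i).+1 /\ beta j = beta i)%N.
    by apply: uniq23; rewrite -H_exp HjE -Hj0' Hj0.
  rewrite (fH j) ?hj1 ?hj2 // (fH i n) ?hi1 ?hi2 // ea eb addSn exprS mulN1r //.
pose eps : rat := ((54 * p)%N%:R)^-1.
have eps0 : 0 < eps by rewrite invr_gt0 ltr0n muln_gt0 p0.
have [N0 hN0] := aa eps eps0.
pose X := predC (fun n => f n == ft n).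
have natb : forall N, (N0 <= N)%N -> (54 * p * count X (iota 0 N) <= N)%N.
  move=> N /hN0; rewrite ler_pdivlMl ?ltr0n ?muln_gt0 ?p0 //.
  by rewrite -natrM ler_nat.
pose t := (3 ^ (N0 + p))%N.
have tge : (N0 + p < t)%N by rewrite ltn_expl.
pose R := ((9 * t) %/ (2 * p))%N.
pose l := ((2 * t) %/ p)%N.
have hR1 : (R * (2 * p) <= 9 * t)%N by apply: leq_trunc_div.
have hR2 : (9 * t < R.+1 * (2 * p))%N by apply: ltn_ceil; rewrite muln_gt0.
have hl1 : (l * p <= 2 * t)%N by apply: leq_trunc_div.
have hl2 : (2 * t < l.+1 * p)%N by apply: ltn_ceil.
pose c1 := count X (iota 0 (p * R)).
pose c2 := count X (iota 0 (2 * p * R)).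
have hc1 : (54 * p * c1 <= p * R)%N by apply: natb; nia.
have hc2 : (54 * p * c2 <= 2 * p * R)%N by apply: natb; nia.
have hc1' : (54 * c1 <= R)%N by rewrite -(@leq_pmul2l p) //; nia.
have hc2' : (54 * c2 <= 2 * R)%N by rewrite -(@leq_pmul2l p) //; nia.
have hLR : (18 * l.+1 < 17 * R)%N.
  rewrite -(@ltn_pmul2l p) //; nia.
pose Y := fun k => X (p * k)%N || X (2 * p * k)%N.
have cY : (count Y (iota l.+1 (R - l.+1)) < R - l.+1)%N.
  apply: (@leq_ltn_trans (c1 + c2)); last by lia.
  have LR : (l.+1 <= R)%N by lia.
  apply: leq_trans (count_sub Y _ _ LR) _.
  apply: leq_trans (_ : count (fun k => X (p * k)%N) (iota 0 R) +
                        count (fun k => X (2 * p * k)%N) (iota 0 R) <= _)%N.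
    by rewrite -count_predUI leq_addr.
  apply: leq_add; apply: count_mul; by rewrite ?muln_gt0 p0.
have : has (predC Y) (iota l.+1 (R - l.+1)).
  rewrite has_count -(ltn_add2l (count Y (iota l.+1 (R - l.+1)))) addn0.
  by rewrite count_predC size_iota.
case/hasP => k; rewrite mem_iota => /andP [kl kR] /norP [/negbNE /eqP e1 /negbNE /eqP e2].
have := key (N0 + p)%N (p * k)%N.
rewrite mulnA e1 e2 ftp -(mulnC p) -mulnA ftp.
have -> : (4 * 3 ^ (N0 + p) <= p * (2 * k) < 9 * 3 ^ (N0 + p))%N.
  rewrite -/t; apply/andP; split; nia.
move=> /(_ isT) /eqP; case: (pm 0%N) => -> //.
Qed.
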